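(* Let $k$ be a positive integer and let $T$ be an $n$-vertex tournament with $\Delta^+(T)-\delta^+(T)\le \frac{n}{10k}-k^2$. Then $T$ contains a $1$-subdivision of $\vec{K}_k$.
   Context: A tournament is a digraph in which for every two distinct vertices exactly one of the two possible arcs between them is present. $\Delta^+(T)$ and $\delta^+(T)$ denote the maximum and minimum out-degree of $T$. $\vec{K}_k$ is the complete digraph on $k$ vertices, having all $k(k-1)$ arcs $uv$ for ordered pairs of distinct vertices. The $1$-subdivision of a digraph is obtained by replacing every arc $uv$ by a directed path $u\to w\to v$ of length two through a new vertex $w$ (distinct new vertices for distinct arcs); $T$ contains it if some subgraph of $T$ is isomorphic to it. *)

(* Defs.v *)
From mathcomp Require Import all_boot all_order all_algebra.
Set Implicit Arguments. Unset Strict Implicit. Unset Printing Implicit Defensive.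

Definition is_tournament (V : finType) (e : rel V) : Prop :=
  (forall x, ~~ e x x) /\
  (forall x y, x != y -> (e x y (+) e y x)).

Definition outdeg (V : finType) (e : rel V) (x : V) : nat := #|[set y | e x y]|.

Definition maxoutdeg (V : finType) (e : rel V) : nat := \max_(x : V) outdeg e x.

(* minimum out-degree delta^+ (the neutral element #|V| is an upper bound of
   every out-degree, so this is the genuine minimum when V is nonempty) *)
Definition minoutdeg (V : finType) (e : rel V) : nat :=
  \big[minn/#|V|]_(x : V) outdeg e x.

Definition contains_subdiv1_complete (V : finType) (e : rel V) (k : nat) : Prop :=
  exists (f : 'I_k -> V) (g : 'I_k -> 'I_k -> V),
    injective f /\
    (forall i j i' j', i != j -> i' != j' -> g i j = g i' j' -> i = i' /\ j = j') /\
    (forall i j l, i != j -> g i j != f l) /\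
    (forall i j, i != j -> e (f i) (g i j) && e (g i j) (f j)).

(* Main.v *)
Require Import Defs.
From mathcomp Require Import all_boot all_order all_algebra.
From mathcomp Require Import zify.
Import Order.TTheory GRing.Theory Num.Theory.
Set Implicit Arguments. Unset Strict Implicit. Unset Printing Implicit Defensive.

Section Aux.
Variables (V : finType) (e : rel V).
Hypothesis He : is_tournament e.

Lemma t_irr x : e x x = false.
Proof. by case: He => H _; apply/negbTE. Qed.

Lemma t_sum x y : (e x y : nat) + e y x = (x != y).
Proof.
case: (eqVneq x y) => [->|nxy]; first by rewrite t_irr.
by case: He => _ /(_ x y nxy); case: (e x y); case: (e y x).
Qed.

Lemma t_anti x y : e x y -> e y x = false.
Proof. move=> h; have := t_sum x y; rewrite h; case: (e y x) => //=; case: (x != y). done. done. Qed.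

Lemma t_tot x y : x != y -> e x y || e y x.
Proof. move=> n; have := t_sum x y; rewrite n; by case: (e x y); case: (e y x). Qed.

Lemma card_sum (A : {set V}) (P : pred V) :
  #|[set w in A | P w]| = \sum_(w in A) (P w : nat).
Proof.
rewrite -sum1_card big_mkcond /= [RHS]big_mkcond /=.
by apply: eq_bigr => w _; rewrite !inE; case: (w \in A); case: (P w).
Qed.

Lemma count_lemma (A : {set V}) m :
  (forall v, v \in A -> #|[set w in A | e w v]| <= m) -> #|A| <= 2 * m + 1.
Proof.
move=> H.
have E1 : \sum_(v in A) \sum_(w in A) ((e w v : nat) + e v w) = #|A| * (#|A| - 1).
  rewrite -sum_nat_const; apply: eq_bigr => v vA.
  rewrite (eq_bigr (fun w => (w != v : nat))); last by move=> w _; rewrite t_sum.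
  rewrite (bigD1 v) //= eqxx add0n.
  rewrite (eq_bigr (fun _ => 1)); last by move=> w /andP [_ ->].
  rewrite sum1_card (cardD1 v A) vA add1n subn1 /=; apply: eq_card => w; rewrite !inE andbC /=.
  done.
have E2 : \sum_(v in A) \sum_(w in A) ((e w v : nat) + e v w) =
   2 * \sum_(v in A) \sum_(w in A) (e w v : nat).
  rewrite (eq_bigr (fun v => \sum_(w in A) (e w v : nat) + \sum_(w in A) (e v w : nat))); last by move=> v _; rewrite big_split.
  rewrite big_split /= [X in _ + X = _]exchange_big /=. lia.
have E3 : \sum_(v in A) \sum_(w in A) (e w v : nat) <= #|A| * m.
  rewrite -sum_nat_const; apply: leq_sum => v vA; rewrite -card_sum; exact: H.
nia.
Qed.


Definition P x y := #|[set w | e x w && e w y]|.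

Lemma pair_ineq u v : u != v -> P u v + outdeg e v <= P v u + outdeg e u + 1.
Proof.
move=> nuv; rewrite /P /outdeg.
set Sb := [set w | e u w && e w v]; set Sc := [set w | e v w && e w u].
set Sa := [set w | e u w && e v w].
have h1 : #|Sb| + #|Sa| <= #|[set y | e u y]|.
  have hI : Sb :&: Sa = set0.
    apply/setP => w; rewrite !inE.
    case: (e u w) => //=; case h: (e w v) => //=; by rewrite t_anti.
  have := cardsU Sb Sa; rewrite hI cards0 subn0 => <-; apply: subset_leq_card; apply/subsetP => w.
  by rewrite !inE; case: (e u w).
have h2 : #|[set y | e v y]| <= #|Sa| + #|Sc| + 1.
  have hs : [set y | e v y] \subset (Sa :|: Sc) :|: [set u].
    apply/subsetP => w; rewrite !inE => hvw.
    case: (eqVneq w u) => [_|nwu]; first by rewrite orbT.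
    rewrite hvw /=; have := t_tot nwu; case: (e w u); case: (e u w) => //.
  apply: (leq_trans (subset_leq_card hs)).
  apply: (leq_trans (leq_card_setU _ _).1); rewrite cards1 leq_add2r.
  exact: (leq_card_setU _ _).1.
lia.
Qed.

Lemma P_self u : P u u = 0.
Proof.
rewrite /P; apply/eqP; rewrite cards_eq0; apply/eqP/setP => w; rewrite !inE.
by case h: (e u w) => //=; rewrite t_anti.
Qed.

End Aux.

Lemma rev_tour (V : finType) (e : rel V) : is_tournament e -> is_tournament (fun x y => e y x).
Proof. case=> h1 h2; split => // x y nxy; rewrite addbC; exact: h2. Qed.

Lemma ball_bound (V : finType) (e : rel V) (He : is_tournament e) M D u :
  (forall x y, outdeg e x <= outdeg e y + D) ->
  #|[set v | (P e u v < M) || (P e v u < M)]| <= 4 * (M + D) + 3.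
Proof.
move=> Hd; set B := [set v | _].
set A1 := [set v in B | e u v]; set A2 := [set v in B | e v u].
have hB : B \subset (A1 :|: A2) :|: [set u].
  apply/subsetP => v vB; rewrite !inE.
  case: (eqVneq v u) => [_|nvu]; first by rewrite orbT.
  move: vB; rewrite inE => ->; have := @t_tot _ _ He u v; rewrite eq_sym nvu.
  by move=> /(_ isT); case: (e u v); case: (e v u).
have hP : forall v, v \in B -> u != v -> P e u v <= M + D /\ P e v u <= M + D.
  move=> v; rewrite inE => hv nuv.
  have p1 := pair_ineq He nuv; have nvu : v != u by rewrite eq_sym.
  have p2 := pair_ineq He nvu.
  idtac.
  have d1 := Hd u v; have d2 := Hd v u.
  move: hv => /orP [] h; lia.
have h1 : #|A1| <= 2 * (M + D) + 1.
  apply: (count_lemma He) => v; rewrite inE => /andP [vB huv].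
  have nuv : u != v by apply/eqP => ev; rewrite ev t_irr in huv.
  have := proj1 (hP v vB nuv); apply: leq_trans; rewrite /P.
  apply: subset_leq_card; apply/subsetP => w; rewrite !inE.
  by case/andP => /andP [_ ->] ->.
have h2 : #|A2| <= 2 * (M + D) + 1.
  apply: (count_lemma (rev_tour He)) => v; rewrite inE => /andP [vB hvu].
  have nuv : u != v by apply/eqP => ev; rewrite ev t_irr in hvu.
  have := proj2 (hP v vB nuv); apply: leq_trans; rewrite /P.
  apply: subset_leq_card; apply/subsetP => w; rewrite !inE.
  by case/andP => /andP [_ ->] ->.
apply: (leq_trans (subset_leq_card hB)).
apply: (leq_trans (leq_card_setU _ _).1); rewrite cards1.
have := (leq_card_setU A1 A2).1; lia.
Qed.

Lemma greedy_indep (V : finType) (ball : V -> {set V}) b :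
  (forall u, u \in ball u) -> (forall u v, v \in ball u -> u \in ball v) ->
  (forall u, #|ball u| <= b) ->
  forall m (W : {set V}), (m == 0) || (m.-1 * b < #|W|) ->
  exists S : {set V}, [/\ S \subset W, #|S| = m &
     forall x y, x \in S -> y \in S -> y \in ball x -> y = x].
Proof.
move=> bself bsym bcard; elim=> [|m IH] W hW.
  exists set0; split; [exact: sub0set | by rewrite cards0 | by move=> x y; rewrite inE].
move: hW => /= hW.
have : 0 < #|W| by lia.
rewrite card_gt0 => /set0Pn [u uW].
set W' := W :\: ball u.
have hW' : (m == 0) || (m.-1 * b < #|W'|).
  case: (eqVneq m 0) => //= mn0.
  have := cardsID (ball u) W; have := subset_leq_card (subsetIr W (ball u)).
  have := bcard u; rewrite -/W'.
  move: hW; have -> : m = m.-1.+1 by lia.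
  rewrite /= mulSn. lia.
have [S' [sS' cS' pS']] := IH W' hW'.
have uS' : u \notin S'.
  apply/negP => /(subsetP sS'); rewrite !inE bself. done.
exists (u |: S'); split.
- apply/subsetP => x; rewrite !inE => /orP [/eqP -> //|] /(subsetP sS').
  by rewrite !inE => /andP [].
- by rewrite cardsU1 uS' cS'.
- move=> x y; rewrite !inE => /orP [/eqP ->|xS] /orP [/eqP ->|yS] //.
  + move=> /(subsetP sS' y) in yS; move: yS; rewrite !inE => /andP [h _] hy.
    by rewrite hy in h.
  + move=> /bsym hu; move: (subsetP sS' x xS); rewrite !inE hu. done.
  + exact: pS'.
Qed.

Lemma assign (I V : finType) (x0 : V) (C : I -> {set V}) :
  forall n (A : {set I}) (F : {set V}), #|A| = n ->
  (forall p, p \in A -> #|F| + #|A| <= #|C p|) ->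
  exists g : I -> V, (forall p, p \in A -> g p \in C p /\ g p \notin F) /\
     {in A &, injective g}.
Proof.
elim=> [|n IH] A F hA hC.
  exists (fun _ => x0); split.
    by move=> p; move/eqP: hA; rewrite cards_eq0 => /eqP ->; rewrite inE.
  by move=> p q; move/eqP: hA; rewrite cards_eq0 => /eqP ->; rewrite inE.
have : 0 < #|A| by rewrite hA.
rewrite card_gt0 => /set0Pn [p0 p0A].
have : 0 < #|C p0 :\: F|.
  have := hC p0 p0A; have := cardsID F (C p0).
  have := subset_leq_card (subsetIr (C p0) F). lia.
rewrite card_gt0 => /set0Pn [x]; rewrite inE => /andP [xF xC].
have hA' : #|A :\ p0| = n by move: hA; rewrite (cardsD1 p0 A) p0A; lia.
have hC' : forall p, p \in A :\ p0 -> #|x |: F| + #|A :\ p0| <= #|C p|.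
  move=> p; rewrite !inE => /andP [_ pA].
  have := hC p pA; rewrite cardsU1 (cardsD1 p0 A) p0A; lia.
have [g' [hg1 hg2]] := IH _ _ hA' hC'.
exists (fun p => if p == p0 then x else g' p); split.
  move=> p pA; case: (eqVneq p p0) => [->|np] //.
  have pA' : p \in A :\ p0 by rewrite !inE np.
  have [h1 h2] := hg1 p pA'; split => //.
  by move: h2; rewrite inE negb_or => /andP [].
move=> p q pA qA /=.
case: (eqVneq p p0) => [->|np]; case: (eqVneq q p0) => [->|nq] //.
- move=> hx; have qA' : q \in A :\ p0 by rewrite !inE nq.
  have [_ h] := hg1 q qA'; by rewrite -hx !inE eqxx in h.
- move=> hx; have pA' : p \in A :\ p0 by rewrite !inE np.
  have [_ h] := hg1 p pA'; by rewrite hx !inE eqxx in h.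
- apply: hg2; by rewrite !inE ?np ?nq.
Qed.

Lemma bigmin_le_nat (V : finType) (F : V -> nat) idx x :
  \big[minn/idx]_(y : V) F y <= F x.
Proof.
have : x \in index_enum V by rewrite mem_index_enum.
elim: (index_enum V) => // y r IH; rewrite inE big_cons /= => /orP [/eqP ->|xr].
  exact: geq_minl.
exact: leq_trans (geq_minr _ _) (IH xr).
Qed.
Local Open Scope ring_scope.

Theorem theorem1p3 (k : nat) (V : finType) (e : rel V) :
  (0 < k)%N ->
  is_tournament e ->
  ((maxoutdeg e)%:R - (minoutdeg e)%:R : rat)
    <= (#|V|)%:R / (10 * k)%:R - (k ^ 2)%:R ->
  contains_subdiv1_complete e k.
Proof.
move=> k0 He Hyp.
have hminV : (minoutdeg e <= #|V|)%N.
  rewrite /minoutdeg; apply: (big_ind (fun x => x <= #|V|)%N) => //.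
    by move=> x y hx _; apply: leq_trans (geq_minl _ _) hx.
  by move=> i _; rewrite /outdeg; exact: max_card.
have hminx : forall x, (minoutdeg e <= outdeg e x)%N.
  by move=> x; exact: bigmin_le_nat.
have hmaxx : forall x, (outdeg e x <= maxoutdeg e)%N.
  by move=> x; rewrite /maxoutdeg; apply: (leq_bigmax x).
case: (posnP #|V|) => [n0|npos].
  exfalso; move: Hyp; rewrite n0 mul0r.
  have -> : minoutdeg e = 0%N by apply/eqP; rewrite -leqn0; move: hminV; rewrite n0.
  rewrite subr0 sub0r.
  have h1 : (0 : rat) <= (maxoutdeg e)%:R by rewrite ler0n.
  have h2 : (0 : rat) < (k ^ 2)%:R by rewrite ltr0n expn_gt0 k0.
  move=> h; have := le_trans h1 h; rewrite lerNr oppr0 => h3.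
  by have := lt_le_trans h2 h3; rewrite ltxx.
have [x0 _] := card_gt0P npos.
set Dl := maxoutdeg e; set dl := minoutdeg e.
have dlD : (dl <= Dl)%N by apply: leq_trans (hminx x0) (hmaxx x0).
set D := (Dl - dl)%N.
have Hd : forall x y, (outdeg e x <= outdeg e y + D)%N.
  move=> x y; have := hmaxx x; have := hminx y; rewrite -/Dl -/dl /D; lia.
have Hn : ((D + k ^ 2) * (10 * k) <= #|V|)%N.
  rewrite -(ler_nat rat) natrM natrD /D natrB //.
  rewrite -ler_pdivlMr; last by rewrite ltr0n muln_gt0 k0.
  by rewrite -lerBrDr.
pose M := (k * k + k)%N.
pose b := (4 * (M + D) + 3)%N.
pose ball u := [set v | (P e u v < M)%N || (P e v u < M)%N].
have bself : forall u, u \in ball u by move=> u; rewrite inE P_self // /M; lia.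
have bsym : forall u v, v \in ball u -> u \in ball v by move=> u v; rewrite !inE orbC.
have bcard : forall u, (#|ball u| <= b)%N by move=> u; exact: ball_bound.
have hW : (k == 0%N) || (k.-1 * b < #|[set: V]|)%N.
  rewrite cardsT; apply/orP; right; rewrite -mulnn in Hn.
  move: Hn; rewrite /b /M; have -> : k = k.-1.+1 by lia.
  rewrite /=; move: (k.-1) => k' Hn; nia.
have [S [_ cS pS]] := greedy_indep bself bsym bcard hW.

pose f := fun i : 'I_k => enum_val (cast_ord (esym cS) i).
have fS : forall i, f i \in S by move=> i; exact: enum_valP.
have finj : injective f.
  by move=> i j /enum_val_inj /cast_ord_inj.
have fP : forall i j, i != j -> (M <= P e (f i) (f j))%N.
  move=> i j nij; have nf : f j != f i.
    by apply/eqP => /finj h; rewrite h eqxx in nij.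
  have : f j \notin ball (f i).
    by apply/negP => /(pS _ _ (fS i) (fS j)) h; rewrite h eqxx in nf.
  by rewrite inE negb_or -!leqNgt => /andP [].
pose C := fun p : 'I_k * 'I_k => [set w | e (f p.1) w && e w (f p.2)].
pose A := [set p : 'I_k * 'I_k | p.1 != p.2].
pose F := [set f i | i : 'I_k].
have hC : forall p, p \in A -> (#|F| + #|A| <= #|C p|)%N.
  move=> [i j]; rewrite inE /= => nij.
  have h1 : (#|F| <= k)%N by apply: leq_trans (leq_imset_card _ _) _; rewrite card_ord.
  have h2 : (#|A| <= k * k)%N.
    apply: leq_trans (subset_leq_card (subsetT A)) _.
    by rewrite cardsT card_prod card_ord.
  have := fP i j nij; rewrite /C /P /= /M => h; apply: leq_trans h; rewrite addnC; exact: leq_add h2 h1.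
have [G [hG1 hG2]] := assign (C:=C) x0 (erefl #|A|) hC.
exists f, (fun i j => G (i, j)); split; [exact: finj | split; [|split]].
- move=> i j i' j' nij nij' hg.
  have := hG2 (i, j) (i', j'); rewrite !inE /= nij nij' => /(_ isT isT hg) [-> ->].
  done.
- move=> i j l nij; have hij : (i, j) \in A by rewrite inE.
  have [_ h] := hG1 _ hij.
  apply/eqP => hl; move: h; rewrite hl; apply/negP/negPn/imsetP; by exists l.
- move=> i j nij; have hij : (i, j) \in A by rewrite inE.
  have [h _] := hG1 _ hij.
  by move: h; rewrite inE.
Qed.
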